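(* In the extended twisted super Yangian $\widetilde{\mathscr B}_{\mathbf s,\boldsymbol\varepsilon}$ the product $B(u)B(-u)$ is a scalar matrix: $B(u)B(-u)=f(u)\cdot 1$, where $f(u)$ is a power series in $u^{-2}$ whose coefficients are central in $\widetilde{\mathscr B}_{\mathbf s,\boldsymbol\varepsilon}$.
   Context: Fix integers $m,n\ge 0$, $\kappa=m+n$, a parity sequence $\mathbf s=(s_1,\dots,s_\kappa)\in\{\pm1\}^\kappa$ with exactly $m$ entries equal to $1$, and write $|i|\in\mathbb Z_2$ with $s_i=(-1)^{|i|}$. Let $V=\mathbb C^{m|n}$ have basis $v_i$ of parity $|i|$ and matrix units $E_{ij}$. Fix $\boldsymbol\varepsilon=(\varepsilon_1,\dots,\varepsilon_\kappa)\in\{\pm1\}^\kappa$. Let $\mathcal P=\sum_{i,j}s_jE_{ij}\otimes E_{ji}\in\mathrm{End}(V\otimes V)$ and $R(u)=1-\mathcal P/u$. The extended twisted super Yangian $\widetilde{\mathscr B}_{\mathbf s,\boldsymbol\varepsilon}$ is the unital associative superalgebra generated by $b_{ij}^{(r)}$ ($1\le i,j\le\kappa$, $r\ge1$) of parity $|i|+|j|$, with $b_{ij}(u)=\delta_{ij}\varepsilon_i+\sum_{r\ge1}b_{ij}^{(r)}u^{-r}$, $B(u)=\sum_{i,j}(-1)^{|i||j|+|j|}b_{ij}(u)\otimes E_{ij}$, subject only to the reflection equation $R(u-v)B_1(u)R(u+v)B_2(v)=B_2(v)R(u+v)B_1(u)R(u-v)$ (with $B_1,B_2$ acting in the first, resp.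 second, tensor factor of $\mathrm{End}(V)^{\otimes 2}$, usual super sign conventions). (The twisted super Yangian $\mathscr B_{\mathbf s,\boldsymbol\varepsilon}$ is its quotient by the unitary condition $B(u)B(-u)=1$.) *)

(* Defs.v *)
From mathcomp Require Import all_boot all_algebra.
From mathcomp Require Import reals complex Rstruct.

Set Implicit Arguments.
Unset Strict Implicit.
Unset Printing Implicit Defensive.

Import GRing.Theory.
Local Open Scope ring_scope.

Notation CC := (Rdefinitions.R)[i].

Section SuperYangian.
Variables (A : ringType) (kappa : nat).
(* par i = |i| (true = odd), i.e. s_i = (-1)^{|i|} *)
Variable par : 'I_kappa -> bool.

Definition sgn (b : bool) : A := (-1) ^+ b.

(* Even elements of A (x) End(V) are represented by their coefficient
   functions X i j  (X = sum_{i,j} X i j (x) E_ij); the coefficient X i j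
   has parity |i|+|j|.  Super product:
   (a (x) E_ik)(a' (x) E_kj) = (-1)^{(|i|+|k|)|a'|} a a' (x) E_ij,
   with |a'| = |k| + |j|. *)
Definition mul2 (X Y : 'I_kappa -> 'I_kappa -> A) (i j : 'I_kappa) : A :=
  \sum_(k < kappa) sgn ((par i (+) par k) && (par k (+) par j)) * X i k * Y k j.

(* Even elements of A (x) End(V) (x) End(V): X i j k l is the coefficient of
   E_ij (x) E_kl (of parity |i|+|j|+|k|+|l|).  Super product:
   (a (x) x (x) y)(a' (x) x' (x) y') =
     (-1)^{|a'|(|x|+|y|) + |y||x'|} a a' (x) x x' (x) y y'. *)
Definition mul4 (X Y : 'I_kappa -> 'I_kappa -> 'I_kappa -> 'I_kappa -> A)
  (i j k l : 'I_kappa) : A :=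
  \sum_(p < kappa) \sum_(q < kappa)
    sgn (((par i (+) par p (+) par k (+) par q)
           && (par p (+) par j (+) par q (+) par l))
         (+) ((par k (+) par q) && (par p (+) par j)))
    * X i p k q * Y p j q l.

Definition add4 (X Y : 'I_kappa -> 'I_kappa -> 'I_kappa -> 'I_kappa -> A) :=
  fun i j k l => X i j k l + Y i j k l.
Definition sub4 (X Y : 'I_kappa -> 'I_kappa -> 'I_kappa -> 'I_kappa -> A) :=
  fun i j k l => X i j k l - Y i j k l.

(* X_1 = X (x) 1  and  X_2 = 1 (x) X  (inside A (x) End V (x) End V) *)
Definition emb1 (X : 'I_kappa -> 'I_kappa -> A) :=
  fun i j k l : 'I_kappa => (k == l)%:R * X i j.
Definition emb2 (X : 'I_kappa -> 'I_kappa -> A) :=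
  fun i j k l : 'I_kappa => (i == j)%:R * X k l.

(* P = sum_{i,j} s_j E_ij (x) E_ji *)
Definition Pmat : 'I_kappa -> 'I_kappa -> 'I_kappa -> 'I_kappa -> A :=
  fun a b c d => ((c == b) && (d == a))%:R * sgn (par b).

(* Generators: b i j r = b_ij^{(r)} for r >= 1 (the value at r = 0 is
   ignored); eps i is epsilon_i (an integer, +1 or -1).
   bser r i j = coefficient of u^{-r} in b_ij(u). *)
Definition bser (eps : 'I_kappa -> int) (b : 'I_kappa -> 'I_kappa -> nat -> A)
  (r : nat) (i j : 'I_kappa) : A :=
  if r is 0 then (i == j)%:R * (eps i)%:~R else b i j r.

(* Coefficient of u^{-r} in the matrix B(u) = sum (-1)^{|i||j|+|j|} b_ij(u) (x) E_ij *)
Definition Bcoef eps b (r : nat) (i j : 'I_kappa) : A :=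
  sgn ((par i && par j) (+) par j) * bser eps b r i j.

Definition Bsh eps b (d r : nat) (i j : 'I_kappa) : A :=
  if (d <= r)%N then Bcoef eps b (r - d) i j else 0.

(* The reflection equation
     R(u-v) B_1(u) R(u+v) B_2(v) = B_2(v) R(u+v) B_1(u) R(u-v),
   multiplied by (u-v)(u+v), i.e. with R(u) replaced by u - P:
     (u-v-P) B_1(u) (u+v-P) B_2(v) = B_2(v) (u+v-P) B_1(u) (u-v-P).
   Writing B_1(u) = sum_r beta_1(r) u^{-r}, B_2(v) = sum_s beta_2(s) v^{-s},
   with X = beta_1(r):
     (u-v-P) X (u+v-P) = u^2 X - v^2 X - u (XP+PX) + v (XP-PX) + PXP,
     (u+v-P) X (u-v-P) = u^2 X - v^2 X - u (XP+PX) + v (PX-XP) + PXP.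
   refl_lhs eps b m n / refl_rhs eps b m n are the coefficients of
   u^{2-m} v^{2-n} (m n : nat) of the two sides. *)
Definition refl_lhs eps b (m n : nat) :=
  let X d := emb1 (Bsh eps b d m) in
  let Y d := emb2 (Bsh eps b d n) in
  let P := Pmat in
  add4 (sub4 (sub4 (add4
    (mul4 (X 0%N) (Y 2%N))
    (mul4 (mul4 (mul4 P (X 2%N)) P) (Y 2%N)))
    (mul4 (X 2%N) (Y 0%N)))
    (mul4 (add4 (mul4 (X 1%N) P) (mul4 P (X 1%N))) (Y 2%N)))
    (mul4 (sub4 (mul4 (X 2%N) P) (mul4 P (X 2%N))) (Y 1%N)).

Definition refl_rhs eps b (m n : nat) :=
  let X d := emb1 (Bsh eps b d m) in
  let Y d := emb2 (Bsh eps b d n) in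
  let P := Pmat in
  add4 (sub4 (sub4 (add4
    (mul4 (Y 2%N) (X 0%N))
    (mul4 (mul4 (mul4 (Y 2%N) P) (X 2%N)) P))
    (mul4 (Y 0%N) (X 2%N)))
    (mul4 (Y 2%N) (add4 (mul4 (X 1%N) P) (mul4 P (X 1%N)))))
    (mul4 (Y 1%N) (sub4 (mul4 P (X 2%N)) (mul4 (X 2%N) P))).

Definition reflection_eq eps b : Prop :=
  forall (m n : nat) (i j k l : 'I_kappa),
    refl_lhs eps b m n i j k l = refl_rhs eps b m n i j k l.

(* Coefficient of u^{-N} in B(u) B(-u), i.e. sum_{r+t=N} (-1)^t beta(r) beta(t). *)
Definition BBneg_coef eps b (N : nat) (i j : 'I_kappa) : A :=
  \sum_(t < N.+1) (-1) ^+ t * mul2 (Bcoef eps b (N - t)) (Bcoef eps b t) i j.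

End SuperYangian.

(* Main.v *)
Require Import Defs.
From mathcomp Require Import all_boot all_algebra.
From mathcomp Require Import reals complex Rstruct.
From mathcomp Require Import zify.
From Stdlib Require Import FunctionalExtensionality.

Import GRing.Theory.
Local Open Scope ring_scope.

Set Implicit Arguments.
Unset Strict Implicit.
Unset Printing Implicit Defensive.

Section Tensor.
Variables (A : nzRingType) (kappa : nat) (par : 'I_kappa -> bool).
Local Notation I := 'I_kappa.
Local Notation T := (I -> I -> I -> I -> A).
Local Notation sg := (sgn A).
Local Notation m4 := (mul4 par).
Local Notation m2 := (mul2 par).
Local Notation P := (Pmat A par).
Ltac bc := repeat match goal with |- context [par ?x] => case: (par x) end.

Lemma sgnD a b : sg (a (+) b) = sg a * sg b.
Proof. by case: a; case: b; rewrite /sgn /= ?expr0 ?expr1 ?mulr1 ?mul1r ?mulrNN ?mulr1. Qed.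

Lemma sgnC b (x : A) : sg b * x = x * sg b.
Proof. by case: b; rewrite /sgn /= ?expr0 ?expr1 ?mulr1 ?mul1r ?mulN1r ?mulrN1. Qed.

Lemma sgnK b : sg b * sg b = 1.
Proof. by rewrite -sgnD addbb /sgn expr0. Qed.

Lemma sgn0 : sg false = 1. Proof. by rewrite /sgn expr0. Qed.

Lemma sum_delta (j : I) (F : I -> A) :
  \sum_(p < kappa) (p == j)%:R * F p = F j.
Proof.
rewrite (bigD1 j) //= eqxx mul1r big1 ?addr0 // => p /negbTE ->; by rewrite mul0r.
Qed.

Lemma sum_delta' (j : I) (F : I -> A) :
  \sum_(p < kappa) (j == p)%:R * F p = F j.
Proof. rewrite -[RHS](sum_delta j); apply: eq_bigr => p _; by rewrite eq_sym. Qed.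

Lemma m4_emb2r (W : T) y i j k l :
  m4 W (emb2 y) i j k l = \sum_(q < kappa)
    sg ((par i (+) par j (+) par k (+) par q) && (par q (+) par l)) * W i j k q * y q l.
Proof.
rewrite /mul4 /emb2 exchange_big /=; apply: eq_bigr => q _.
set F := fun p : I => sg (((par i (+) par p (+) par k (+) par q) && (par p (+) par j (+) par q (+) par l))
     (+) ((par k (+) par q) && (par p (+) par j))) * W i p k q * y q l.
transitivity (\sum_(p < kappa) (p == j)%:R * F p).
  apply: eq_bigr => p _; rewrite /F; case: eqP => [->|_]; by rewrite ?mul1r ?mul0r ?mulr0 ?mul1r.
rewrite sum_delta /F; congr (sg _ * _ * _); by bc.
Qed.

Lemma m4_emb2l (W : T) y i j k l :
  m4 (emb2 y) W i j k l = \sum_(q < kappa)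
    sg (((par k (+) par q) && (par i (+) par j (+) par q (+) par l)) (+) ((par k (+) par q) && (par i (+) par j)))
     * y k q * W i j q l.
Proof.
rewrite /mul4 /emb2.
set F := fun p : I => \sum_(q < kappa)
    sg (((par k (+) par q) && (par p (+) par j (+) par q (+) par l)) (+) ((par k (+) par q) && (par p (+) par j)))
     * y k q * W p j q l.
transitivity (\sum_(p < kappa) (p == i)%:R * F p); last first.
  rewrite sum_delta /F; apply: eq_bigr => q _; congr (sg _ * _ * _); by bc.
apply: eq_bigr => p _; rewrite /F big_distrr /=; apply: eq_bigr => q _.
rewrite [i == p]eq_sym; case: eqP => [->|_]; rewrite ?mul1r ?mul0r ?mulr0 ?mul0r //.
congr (sg _ * _ * _); by bc.
Qed.

Lemma m4_Pr (W : T) i j k l :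
  m4 W P i j k l = sg ((par k (+) par j) && (par l (+) par j)) * sg (par j) * W i l k j.
Proof.
rewrite /mul4 /Pmat.
transitivity (\sum_(p < kappa) (p == l)%:R * \sum_(q < kappa) (q == j)%:R *
   (sg ((par k (+) par j) && (par l (+) par j)) * sg (par j) * W i l k j)).
  apply: eq_bigr => p _; rewrite big_distrr; apply: eq_bigr => q _ /=.
  rewrite [l == p]eq_sym; case: (q =P j) => [->|_]; case: (p =P l) => [->|_];
    rewrite ?eqxx ?mul1r ?mul0r ?mulr0 ?mul0r ?andbF //=.
  rewrite -mulrA -(sgnC (par j)) mulrA; congr (sg _ * _ * _); by bc.
by rewrite sum_delta sum_delta.
Qed.

Lemma m4_Pl (W : T) i j k l :
  m4 P W i j k l = sg ((par k (+) par i) && (par k (+) par j)) * sg (par k) * W k j i l.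
Proof.
rewrite /mul4 /Pmat.
transitivity (\sum_(p < kappa) (p == k)%:R * \sum_(q < kappa) (q == i)%:R *
   (sg ((par k (+) par i) && (par k (+) par j)) * sg (par k) * W k j i l)).
  apply: eq_bigr => p _; rewrite big_distrr; apply: eq_bigr => q _ /=.
  rewrite [k == p]eq_sym; case: (q =P i) => [->|_]; case: (p =P k) => [->|_];
    rewrite ?eqxx ?mul1r ?mul0r ?mulr0 ?mul0r ?andbF //=.
  congr (sg _ * _ * _); by bc.
by rewrite sum_delta sum_delta.
Qed.


Lemma swap4 (F : I -> I -> I -> I -> A) :
  \sum_(p < kappa) \sum_(q < kappa) \sum_(p' < kappa) \sum_(q' < kappa) F p q p' q'
  = \sum_(p' < kappa) \sum_(q' < kappa) \sum_(p < kappa) \sum_(q < kappa) F p q p' q'.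
Proof.
transitivity (\sum_(p < kappa) \sum_(p' < kappa) \sum_(q < kappa) \sum_(q' < kappa) F p q p' q').
  by apply: eq_bigr => p _; rewrite exchange_big.
rewrite exchange_big; apply: eq_bigr => p' _.
transitivity (\sum_(p < kappa) \sum_(q' < kappa) \sum_(q < kappa) F p q p' q').
  by apply: eq_bigr => p _; rewrite exchange_big.
by rewrite exchange_big.
Qed.

Lemma sg_shuf a b c d (x y z : A) : a (+) b = c (+) d ->
  sg a * x * y * sg b * z = sg c * x * sg d * y * z.
Proof.
move=> H.
rewrite -(mulrA (sg a) x y) -(mulrA (sg a) (x * y)) -(sgnC b (x * y)) !mulrA -sgnD H sgnD.
by rewrite -(mulrA (sg c) x) -(sgnC d x) !mulrA.
Qed.

Lemma sg_shuf2 a b c d (x y z : A) : a (+) b = c (+) d ->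
  sg a * sg b * x * y * z = sg c * x * sg d * y * z.
Proof.
move=> H; rewrite -sgnD H sgnD.
by rewrite -(mulrA (sg c) x) -(sgnC d x) !mulrA.
Qed.

Lemma m4A (X Y Z : T) i j k l :
  m4 (m4 X Y) Z i j k l = m4 X (m4 Y Z) i j k l.
Proof.
rewrite /mul4.
transitivity (\sum_(p < kappa) \sum_(q < kappa) \sum_(p' < kappa) \sum_(q' < kappa)
   sg (((par i (+) par p (+) par k (+) par q) && (par p (+) par j (+) par q (+) par l))
         (+) ((par k (+) par q) && (par p (+) par j))) *
   sg (((par i (+) par p' (+) par k (+) par q') && (par p' (+) par p (+) par q' (+) par q))
         (+) ((par k (+) par q') && (par p' (+) par p))) *
   (X i p' k q' * Y p' p q' q * Z p j q l)).
  apply: eq_bigr => p _; apply: eq_bigr => q _.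
  rewrite big_distrr big_distrl /=; apply: eq_bigr => p' _.
  rewrite big_distrr big_distrl /=; apply: eq_bigr => q' _.
  by rewrite !mulrA -[_ * sg _ * X i p' k q']mulrA [sg _ * X _ _ _ _]sgnC !mulrA.
rewrite swap4; apply: eq_bigr => p' _; apply: eq_bigr => q' _.
rewrite big_distrr /=; apply: eq_bigr => p _.
rewrite big_distrr /=; apply: eq_bigr => q _.
rewrite !mulrA; apply: sg_shuf2; by bc.
Qed.


Ltac sgnorm := rewrite ?mulrA; repeat (rewrite -?sgnD; rewrite -(sgnC _ _) ?mulrA); rewrite -?sgnD.

Lemma funext4 (X Y : T) : (forall i j k l, X i j k l = Y i j k l) -> X = Y.
Proof.
move=> H; do 4!(apply: functional_extensionality => ?); exact: H.
Qed.

Lemma m4_emb22 (y z : I -> I -> A) : m4 (emb2 y) (emb2 z) = emb2 (m2 y z).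
Proof.
apply: funext4 => i j k l; rewrite m4_emb2r /emb2 /mul2 big_distrr; apply: eq_bigr => q _ /=.
case: (i =P j) => [->|_]; rewrite ?mul1r ?mul0r ?mulr0 ?mul0r //.
congr (sg _ * _ * _); by bc.
Qed.

Lemma PXP (x : I -> I -> A) : m4 (m4 P (emb1 x)) P = emb2 x.
Proof.
apply: funext4 => i j k l; rewrite m4_Pr m4_Pl /emb1 /emb2.
case: (i =P j) => [->|_]; rewrite ?mul1r ?mul0r ?mulr0 ?mul0r //.
sgnorm; rewrite -[RHS]mul1r -sgn0; congr (sg _ * _); by bc.
Qed.

Lemma E3 (x y : I -> I -> A) i j k l :
  m4 (m4 (emb1 x) P) (emb2 y) i j k l = (k == j)%:R * sg (par j) * m2 x y i l.
Proof.
rewrite m4_emb2r /mul2 big_distrr; apply: eq_bigr => q _ /=.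
rewrite m4_Pr /emb1.
case: (k =P j) => [->|_]; rewrite ?mul1r ?mul0r ?mulr0 ?mul0r //.
sgnorm; congr (sg _ * _ * _); by bc.
Qed.

Lemma E5 (x y : I -> I -> A) i j k l :
  m4 (emb2 y) (m4 P (emb1 x)) i j k l =
  (i == l)%:R * sg ((par k (+) par j) && (par i (+) par j)) * sg (par j) * m2 y x k j.
Proof.
rewrite m4_emb2l /mul2 big_distrr; apply: eq_bigr => q _ /=.
rewrite m4_Pl /emb1.
case: (i =P l) => [->|_]; rewrite ?mul1r ?mul0r ?mulr0 ?mul0r //.
sgnorm; congr (sg _ * _ * _); by bc.
Qed.

Lemma m4_addl (X Y Z : T) i j k l : m4 (add4 X Y) Z i j k l = m4 X Z i j k l + m4 Y Z i j k l.
Proof.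
rewrite /mul4 /add4 -big_split; apply: eq_bigr => p _ /=; rewrite -big_split; apply: eq_bigr => q _ /=.
by rewrite mulrDr mulrDl.
Qed.
Lemma m4_subl (X Y Z : T) i j k l : m4 (sub4 X Y) Z i j k l = m4 X Z i j k l - m4 Y Z i j k l.
Proof.
rewrite /mul4 /sub4 -sumrB; apply: eq_bigr => p _ /=; rewrite -sumrB; apply: eq_bigr => q _ /=.
by rewrite mulrBr mulrBl.
Qed.
Lemma m4_addr (X Y Z : T) i j k l : m4 Z (add4 X Y) i j k l = m4 Z X i j k l + m4 Z Y i j k l.
Proof.
rewrite /mul4 /add4 -big_split; apply: eq_bigr => p _ /=; rewrite -big_split; apply: eq_bigr => q _ /=.
by rewrite mulrDr.
Qed.
Lemma m4_subr (X Y Z : T) i j k l : m4 Z (sub4 X Y) i j k l = m4 Z X i j k l - m4 Z Y i j k l.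
Proof.
rewrite /mul4 /sub4 -sumrB; apply: eq_bigr => p _ /=; rewrite -sumrB; apply: eq_bigr => q _ /=.
by rewrite mulrBr.
Qed.

Lemma emb1_0 : emb1 (fun _ _ : I => 0 : A) = (fun _ _ _ _ => 0).
Proof. by apply: funext4 => i j k l; rewrite /emb1 mulr0. Qed.
Lemma emb2_0 : emb2 (fun _ _ : I => 0 : A) = (fun _ _ _ _ => 0).
Proof. by apply: funext4 => i j k l; rewrite /emb2 mulr0. Qed.
Lemma m4_0l (W : T) : m4 (fun _ _ _ _ => 0) W = (fun _ _ _ _ => 0).
Proof. apply: funext4 => i j k l; rewrite /mul4 big1 // => p _; rewrite big1 // => q _; by rewrite mulr0 mul0r. Qed.
Lemma m4_0r (W : T) : m4 W (fun _ _ _ _ => 0) = (fun _ _ _ _ => 0).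
Proof. apply: funext4 => i j k l; rewrite /mul4 big1 // => p _; rewrite big1 // => q _; by rewrite mulr0. Qed.
Lemma m2_0l (y : I -> I -> A) i j : m2 (fun _ _ => 0) y i j = 0.
Proof. rewrite /mul2 big1 // => p _; by rewrite mulr0 mul0r. Qed.
Lemma m2_0r (y : I -> I -> A) i j : m2 y (fun _ _ => 0) i j = 0.
Proof. rewrite /mul2 big1 // => p _; by rewrite mulr0. Qed.

Lemma m4_emb2r_sum (W : T) N (F : nat -> I -> I -> A) i j k l :
  m4 W (emb2 (fun a b => \sum_(n < N) F n a b)) i j k l = \sum_(n < N) m4 W (emb2 (F n)) i j k l.
Proof.
rewrite m4_emb2r (eq_bigr _ (fun q _ => big_distrr _ _ _)) exchange_big /=.
by apply: eq_bigr => n _; rewrite m4_emb2r.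
Qed.

Lemma m4_emb2l_sum (W : T) N (F : nat -> I -> I -> A) i j k l :
  m4 (emb2 (fun a b => \sum_(n < N) F n a b)) W i j k l = \sum_(n < N) m4 (emb2 (F n)) W i j k l.
Proof.
rewrite m4_emb2l.
under eq_bigr => q _ do rewrite big_distrr big_distrl /=.
rewrite exchange_big /=; apply: eq_bigr => n _; rewrite m4_emb2l.
apply: eq_bigr => q _; by rewrite ?mulrA.
Qed.

End Tensor.

Section Reindex.
Variables (A : nzRingType) (kappa : nat) (par : 'I_kappa -> bool).
Variables (eps : 'I_kappa -> int) (b : 'I_kappa -> 'I_kappa -> nat -> A).
Local Notation I := 'I_kappa.
Local Notation Bsh := (Bsh par eps b).
Local Notation Bc := (Bcoef par eps b).

Lemma Bsh_eq d r : Bsh d r = if (d <= r)%N then Bc (r - d) else (fun _ _ => 0).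
Proof.
do 2!(apply: functional_extensionality => ?); rewrite /Defs.Bsh; by case: ifP.
Qed.

Lemma Bsh0 r : Bsh 0 r = Bc r.
Proof. by rewrite Bsh_eq subn0. Qed.

Lemma reindex_sh (F : (I -> I -> A) -> (I -> I -> A) -> A)
  (F0l : forall y, F (fun _ _ => 0) y = 0) (F0r : forall x, F x (fun _ _ => 0) = 0) K d1 d2 :
  \sum_(n < K.+1) (-1) ^+ n * F (Bsh d1 (K - n)) (Bsh d2 n) =
  if (d1 + d2 <= K)%N then (-1) ^+ d2 * \sum_(c < (K - d1 - d2).+1)
      (-1) ^+ c * F (Bc (K - d1 - d2 - c)) (Bc c) else 0.
Proof.
have Z n : (n < d2)%N || (K - n < d1)%N -> (-1) ^+ n * F (Bsh d1 (K - n)) (Bsh d2 n) = 0.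
  case/orP => h; rewrite !Bsh_eq.
    by rewrite [(d2 <= n)%N]leqNgt h /= F0r mulr0.
  by rewrite [(d1 <= _)%N]leqNgt h /= F0l mulr0.
case: leqP => hK; last first.
  apply: big1 => n _; apply: Z; have := ltn_ord n; lia.
rewrite -(big_mkord xpredT (fun n => (-1) ^+ n * F (Bsh d1 (K - n)) (Bsh d2 n))).
have h1 : (d2 <= K.+1)%N by lia.
rewrite (@big_cat_nat _ _ _ d2 0 K.+1 _ _ (leq0n d2) h1) /=.
rewrite [X in X + _]big_nat_cond big1 ?add0r; last first.
  by move=> n /andP[/andP[_ hn] _]; apply: Z; rewrite hn.
rewrite -{1}[d2]add0n big_addn.
have h2 : ((K - d1 - d2).+1 <= K.+1 - d2)%N by lia.
rewrite (@big_cat_nat _ _ _ (K - d1 - d2).+1 0 (K.+1 - d2) _ _ (leq0n _) h2) /=.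
rewrite [X in _ + X]big_nat_cond [X in _ + X]big1 ?addr0; last first.
  move=> n /andP[/andP[hn hn'] _]; apply: (Z (n + d2)); apply/orP; right; lia.
rewrite big_mkord big_distrr; apply: eq_bigr => c _ /=.
have hc := ltn_ord c.
rewrite !Bsh_eq.
have -> : (d1 <= K - (c + d2))%N by lia.
have -> : (d2 <= c + d2)%N by lia.
have -> : (K - (c + d2) - d1 = K - d1 - d2 - c)%N by lia.
have -> : (c + d2 - d2 = c)%N by lia.
by rewrite exprD mulrA -exprD addnC exprD.
Qed.

End Reindex.

Section Part1.
Variables (A : nzRingType) (kappa : nat) (par : 'I_kappa -> bool).
Variables (eps : 'I_kappa -> int) (b : 'I_kappa -> 'I_kappa -> nat -> A).
Local Notation I := 'I_kappa.
Local Notation sg := (sgn A).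
Local Notation m4 := (mul4 par).
Local Notation m2 := (mul2 par).
Local Notation P := (Pmat A par).
Local Notation Bsh := (Bsh par eps b).
Local Notation Bc := (Bcoef par eps b).

Definition F1 (i j k l : I) (x y : I -> I -> A) := m4 (emb1 x) (emb2 y) i j k l.
Definition F2 (i j k l : I) (x y : I -> I -> A) := (i == j)%:R * m2 x y k l.
Definition F3 (i j k l : I) (x y : I -> I -> A) := (k == j)%:R * sg (par j) * m2 x y i l.
Definition F4 (i j k l : I) (x y : I -> I -> A) := m4 (m4 P (emb1 x)) (emb2 y) i j k l.
Definition G1 (i j k l : I) (x y : I -> I -> A) := m4 (emb2 y) (emb1 x) i j k l.
Definition G2 (i j k l : I) (x y : I -> I -> A) := (i == j)%:R * m2 y x k l.
Definition G3 (i j k l : I) (x y : I -> I -> A) := m4 (emb2 y) (m4 (emb1 x) P) i j k l.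
Definition G4 (i j k l : I) (x y : I -> I -> A) :=
  (i == l)%:R * sg ((par k (+) par j) && (par i (+) par j)) * sg (par j) * m2 y x k j.

Lemma add4E (X Y : I -> I -> I -> I -> A) i j k l : add4 X Y i j k l = X i j k l + Y i j k l.
Proof. by []. Qed.
Lemma sub4E (X Y : I -> I -> I -> I -> A) i j k l : sub4 X Y i j k l = X i j k l - Y i j k l.
Proof. by []. Qed.

Lemma lhs_exp m n i j k l : refl_lhs par eps b m n i j k l =
  F1 i j k l (Bsh 0 m) (Bsh 2 n) + F2 i j k l (Bsh 2 m) (Bsh 2 n) - F1 i j k l (Bsh 2 m) (Bsh 0 n)
  - (F3 i j k l (Bsh 1 m) (Bsh 2 n) + F4 i j k l (Bsh 1 m) (Bsh 2 n))
  + (F3 i j k l (Bsh 2 m) (Bsh 1 n) - F4 i j k l (Bsh 2 m) (Bsh 1 n)).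
Proof.
rewrite /refl_lhs; cbv zeta; rewrite !(add4E, sub4E).
by rewrite !m4_subl !m4_addl PXP m4_emb22 !E3.
Qed.

Lemma m4A' (X Y Z : I -> I -> I -> I -> A) : m4 (m4 X Y) Z = m4 X (m4 Y Z).
Proof. apply: funext4 => i j k l; exact: m4A. Qed.

Lemma rhs_exp m n i j k l : refl_rhs par eps b m n i j k l =
  G1 i j k l (Bsh 0 m) (Bsh 2 n) + G2 i j k l (Bsh 2 m) (Bsh 2 n) - G1 i j k l (Bsh 2 m) (Bsh 0 n)
  - (G3 i j k l (Bsh 1 m) (Bsh 2 n) + G4 i j k l (Bsh 1 m) (Bsh 2 n))
  + (G4 i j k l (Bsh 2 m) (Bsh 1 n) - G3 i j k l (Bsh 2 m) (Bsh 1 n)).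
Proof.
rewrite /refl_rhs; cbv zeta; rewrite !(add4E, sub4E).
rewrite !m4_subr !m4_addr !E5.
by rewrite m4A' m4A' -(m4A' P (emb1 _) P) PXP m4_emb22.
Qed.


Lemma part1_sum M i j k l : reflection_eq par eps b ->
  let S F d1 d2 := \sum_(n < M.+4) (-1) ^+ n * F i j k l (Bsh d1 (M.+3 - n)) (Bsh d2 n) in
  S F1 0 2 + S F2 2 2 - S F1 2 0 - (S F3 1 2 + S F4 1 2) + (S F3 2 1 - S F4 2 1)
  = S G1 0 2 + S G2 2 2 - S G1 2 0 - (S G3 1 2 + S G4 1 2) + (S G4 2 1 - S G3 2 1).
Proof.
move=> H S.
have : \sum_(n < M.+4) (-1) ^+ n * refl_lhs par eps b (M.+3 - n) n i j k l =
       \sum_(n < M.+4) (-1) ^+ n * refl_rhs par eps b (M.+3 - n) n i j k l.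
  by apply: eq_bigr => n _; rewrite H.
under eq_bigr => n _ do rewrite lhs_exp.
under [X in _ = X -> _]eq_bigr => n _ do rewrite rhs_exp.
under eq_bigr => n _ do rewrite !(mulrDr, mulrN).
under [X in _ = X -> _]eq_bigr => n _ do rewrite !(mulrDr, mulrN).
rewrite !(big_split, sumrN) /=.
by rewrite /S.
Qed.

Lemma grp (V : zmodType) (a p f3 f4 : V) :
  a + p - a - (f3 + f4) + (- f3 - - f4) = p - f3 *+ 2.
Proof.
by rewrite [a + p]addrC addrK -addrA; congr (p + _); rewrite opprK opprD addrACA addNr addr0 mulr2n opprD.
Qed.
Lemma grp2 (V : zmodType) (a p f3 f4 : V) :
  a + p - a - (f3 + f4) + (- f4 - - f3) = p - f4 *+ 2.
Proof.
by rewrite [a + p]addrC addrK -addrA; congr (p + _); rewrite opprK opprD [- f3 - f4]addrC addrACA addNr addr0 mulr2n opprD.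
Qed.

Definition Cs (F : I -> I -> I -> I -> (I -> I -> A) -> (I -> I -> A) -> A) i j k l N :=
  \sum_(c < N.+1) (-1) ^+ c * F i j k l (Bc (N - c)) (Bc c).

Lemma signC e (a : A) : (-1) ^+ e * a = a * (-1) ^+ e.
Proof. rewrite -signr_odd; exact: sgnC. Qed.

Lemma Cs_pull (F : I -> I -> I -> I -> (I -> I -> A) -> (I -> I -> A) -> A) (a : A) (g : (I -> I -> A) -> (I -> I -> A) -> A) i j k l N :
  (forall x y, F i j k l x y = a * g x y) ->
  Cs F i j k l N = a * \sum_(c < N.+1) (-1) ^+ c * g (Bc (N - c)) (Bc c).
Proof.
move=> HF; rewrite /Cs big_distrr; apply: eq_bigr => c _ /=.
by rewrite HF mulrA signC -mulrA.
Qed.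

Definition Rs N (k l : I) := \sum_(c < N.+1) (-1) ^+ c * m2 (Bc c) (Bc (N - c)) k l.

Lemma CsF2 i j k l N : Cs F2 i j k l N = (i == j)%:R * BBneg_coef par eps b N k l.
Proof. by rewrite (@Cs_pull _ ((i == j)%:R) (fun x y => m2 x y k l)). Qed.
Lemma CsF3 i j k l N : Cs F3 i j k l N = (k == j)%:R * sg (par j) * BBneg_coef par eps b N i l.
Proof. by rewrite (@Cs_pull _ ((k == j)%:R * sg (par j)) (fun x y => m2 x y i l)). Qed.
Lemma CsG2 i j k l N : Cs G2 i j k l N = (i == j)%:R * Rs N k l.
Proof. by rewrite (@Cs_pull _ ((i == j)%:R) (fun x y => m2 y x k l)). Qed.
Lemma CsG4 i j k l N : Cs G4 i j k l N =
  (i == l)%:R * sg ((par k (+) par j) && (par i (+) par j)) * sg (par j) * Rs N k j.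
Proof. by rewrite (@Cs_pull _ ((i == l)%:R * sg ((par k (+) par j) && (par i (+) par j)) * sg (par j)) (fun x y => m2 y x k j)). Qed.

Lemma S_re F i j k l M d1 d2 :
  (forall y, F i j k l (fun _ _ => 0) y = 0) -> (forall x, F i j k l x (fun _ _ => 0) = 0) ->
  \sum_(n < M.+4) (-1) ^+ n * F i j k l (Bsh d1 (M.+3 - n)) (Bsh d2 n) =
  if (d1 + d2 <= M.+3)%N then (-1) ^+ d2 * Cs F i j k l (M.+3 - d1 - d2) else 0.
Proof. move=> h1 h2; exact: (@reindex_sh _ _ par eps b (F i j k l) h1 h2 M.+3 d1 d2). Qed.

Lemma part1_main M i j k l : reflection_eq par eps b ->
  (if (1 <= M)%N then (i == j)%:R * BBneg_coef par eps b M.-1 k l else 0)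
   - ((k == j)%:R * sg (par j) * BBneg_coef par eps b M i l) *+ 2
  = (if (1 <= M)%N then (i == j)%:R * Rs M.-1 k l else 0)
   - ((i == l)%:R * sg ((par k (+) par j) && (par i (+) par j)) * sg (par j) * Rs M k j) *+ 2.
Proof.
move=> H; move: (part1_sum M i j k l H) => /=.
have z1 : forall y, F1 i j k l (fun _ _ => 0) y = 0 by move=> y; rewrite /F1 emb1_0 m4_0l.
have z1' : forall x, F1 i j k l x (fun _ _ => 0) = 0 by move=> x; rewrite /F1 emb2_0 m4_0r.
have z2 : forall y, F2 i j k l (fun _ _ => 0) y = 0 by move=> y; rewrite /F2 m2_0l mulr0.
have z2' : forall x, F2 i j k l x (fun _ _ => 0) = 0 by move=> x; rewrite /F2 m2_0r mulr0.
have z3 : forall y, F3 i j k l (fun _ _ => 0) y = 0 by move=> y; rewrite /F3 m2_0l mulr0.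
have z3' : forall x, F3 i j k l x (fun _ _ => 0) = 0 by move=> x; rewrite /F3 m2_0r mulr0.
have z4 : forall y, F4 i j k l (fun _ _ => 0) y = 0 by move=> y; rewrite /F4 emb1_0 m4_0r m4_0l.
have z4' : forall x, F4 i j k l x (fun _ _ => 0) = 0 by move=> x; rewrite /F4 emb2_0 m4_0r.
have y1 : forall y, G1 i j k l (fun _ _ => 0) y = 0 by move=> y; rewrite /G1 emb1_0 m4_0r.
have y1' : forall x, G1 i j k l x (fun _ _ => 0) = 0 by move=> x; rewrite /G1 emb2_0 m4_0l.
have y2 : forall y, G2 i j k l (fun _ _ => 0) y = 0 by move=> y; rewrite /G2 m2_0r mulr0.
have y2' : forall x, G2 i j k l x (fun _ _ => 0) = 0 by move=> x; rewrite /G2 m2_0l mulr0.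
have y3 : forall y, G3 i j k l (fun _ _ => 0) y = 0 by move=> y; rewrite /G3 emb1_0 m4_0l m4_0r.
have y3' : forall x, G3 i j k l x (fun _ _ => 0) = 0 by move=> x; rewrite /G3 emb2_0 m4_0l.
have y4 : forall y, G4 i j k l (fun _ _ => 0) y = 0 by move=> y; rewrite /G4 m2_0r mulr0.
have y4' : forall x, G4 i j k l x (fun _ _ => 0) = 0 by move=> x; rewrite /G4 m2_0l mulr0.
rewrite !S_re //.
have c1 : (0 + 2 <= M.+3)%N by [].
have c2 : (2 + 0 <= M.+3)%N by [].
have c3 : (1 + 2 <= M.+3)%N by [].
have c4 : (2 + 1 <= M.+3)%N by [].
have c5 : (2 + 2 <= M.+3)%N = (0 < M)%N by [].
rewrite ?c1 ?c2 ?c3 ?c4 c5.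
have -> : (M.+3 - 0 - 2 = M.+1)%N by lia.
have -> : (M.+3 - 2 - 0 = M.+1)%N by lia.
have -> : (M.+3 - 1 - 2 = M)%N by lia.
have -> : (M.+3 - 2 - 1 = M)%N by lia.
have -> : (M.+3 - 2 - 2 = M.-1)%N by lia.
have e2 : (-1) ^+ 2 = 1 :> A by rewrite expr2 mulrNN mulr1.
rewrite e2 expr0 expr1 !mul1r !mulN1r grp grp2 CsF2 CsF3 CsG2 CsG4.
done.
Qed.

End Part1.

Section Part1b.
Variables (A : nzRingType) (kappa : nat) (par : 'I_kappa -> bool).
Variables (eps : 'I_kappa -> int) (b : 'I_kappa -> 'I_kappa -> nat -> A).
Hypothesis H : reflection_eq par eps b.
Hypothesis H2 : forall x : A, x *+ 2 = 0 -> x = 0.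
Local Notation I := 'I_kappa.
Local Notation sg := (sgn A).
Local Notation m2 := (mul2 par).
Local Notation Bc := (Bcoef par eps b).
Local Notation C := (BBneg_coef par eps b).

Lemma Rs_C N (k l : I) : Rs par eps b N k l = (-1) ^+ N * C N k l.
Proof.
rewrite /Rs /BBneg_coef (reindex_inj rev_ord_inj) big_distrr /=; apply: eq_bigr => c _.
have hc := ltn_ord c.
rewrite subSS.
have -> : (N - (N - c) = c)%N by lia.
have E : (-1) ^+ (N - c) = (-1) ^+ N * (-1) ^+ c :> A.
  rewrite -signr_odd oddB; last by lia.
  rewrite -[(-1) ^+ N]signr_odd -[(-1) ^+ c]signr_odd.
  by case: (odd N); case: (odd c); rewrite /= ?expr0 ?expr1 ?mulrNN ?mulr1 ?mul1r.
by rewrite E mulrA.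
Qed.

Lemma sgK' (x : A) bb : sg bb * x = 0 -> x = 0.
Proof. by move=> h; rewrite -[x]mul1r -(sgnK A bb) -mulrA h mulr0. Qed.

Lemma offdiag M (i l : I) : i != l -> C M i l = 0.
Proof.
move=> il; have := part1_main M i l l l H.
rewrite (negbTE il) !mul0r !if_same eqxx mul1r mul0rn subr0 sub0r => /eqP.
by rewrite oppr_eq0 => /eqP /H2 /sgK'.
Qed.

Lemma diag M (i j : I) : i != j -> C M i i = (-1) ^+ M * C M j j.
Proof.
move=> ij; have := part1_main M i j j i H.
rewrite (negbTE ij) !mul0r !if_same !eqxx !sub0r addbb andFb => /oppr_inj.
rewrite sgn0 !mul1r => E.
rewrite -Rs_C; apply/eqP; rewrite -subr_eq0; apply/eqP; apply: (@sgK' _ (par j)).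
by apply: H2; rewrite mulrBr mulrnBl E subrr.
Qed.

Lemma oddC M (i : I) : odd M -> C M i i = 0.
Proof.
move=> oM; have := part1_main M i i i i H.
have M0 : (0 < M)%N by case: M oM.
rewrite M0 !eqxx addbb andFb sgn0 !mul1r !Rs_C.
have e1 : (-1) ^+ M.-1 = 1 :> A.
  rewrite -signr_odd; have -> : odd M.-1 = false by case: M oM M0 => // n /= /negPf.
  by rewrite expr0.
have e2 : (-1) ^+ M = -1 :> A by rewrite -signr_odd oM expr1.
rewrite e1 e2 mul1r mulN1r mulrN => /addrI /oppr_inj.
rewrite mulNrn => /eqP; rewrite -subr_eq0 opprK -mulrnDl -mulr2n => /eqP.
move/H2/H2; exact: sgK'.
Qed.

End Part1b.

Section Part2a.
Variables (A : nzRingType) (kappa : nat) (par : 'I_kappa -> bool).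
Local Notation I := 'I_kappa.
Local Notation T := (I -> I -> I -> I -> A).
Local Notation sg := (sgn A).
Local Notation m4 := (mul4 par).
Local Notation m2 := (mul2 par).
Local Notation P := (Pmat A par).

Lemma assocV2 (Y X : T) : m4 (m4 (m4 Y P) X) P = m4 Y (m4 (m4 P X) P).
Proof. by rewrite !m4A' -(@m4A' _ _ par P X P). Qed.

Lemma m4_subr_fun (Y X1 X2 : T) :
  m4 Y (sub4 X1 X2) = (fun i j k l => - m4 Y (sub4 X2 X1) i j k l).
Proof. by apply: funext4 => i j k l; rewrite !m4_subr opprB. Qed.

Lemma m4_oppl (W Z : T) i j k l : m4 (fun a b c d => - W a b c d) Z i j k l = - m4 W Z i j k l.
Proof.
rewrite /mul4 -sumrN; apply: eq_bigr => p _; rewrite -sumrN; apply: eq_bigr => q _.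
by rewrite mulrN mulNr.
Qed.
Lemma m4_oppr (W Z : T) i j k l : m4 Z (fun a b c d => - W a b c d) i j k l = - m4 Z W i j k l.
Proof.
rewrite /mul4 -sumrN; apply: eq_bigr => p _; rewrite -sumrN; apply: eq_bigr => q _.
by rewrite mulrN.
Qed.

Lemma m4_emb2r_lin (W : T) N (Y : nat -> I -> I -> A) i j k l :
  \sum_(c < N) (-1) ^+ c * m4 W (emb2 (Y c)) i j k l =
  m4 W (emb2 (fun a b => \sum_(c < N) (-1) ^+ c * Y c a b)) i j k l.
Proof.
rewrite (@m4_emb2r_sum _ _ par W N (fun c a b => (-1) ^+ c * Y c a b)); apply: eq_bigr => c _.
rewrite !m4_emb2r big_distrr; apply: eq_bigr => q _ /=.
by rewrite mulrA signC -!mulrA.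
Qed.

Lemma m4_emb2l_lin (W : T) N (Y : nat -> I -> I -> A) i j k l :
  \sum_(c < N) (-1) ^+ c * m4 (emb2 (Y c)) W i j k l =
  m4 (emb2 (fun a b => \sum_(c < N) (-1) ^+ c * Y c a b)) W i j k l.
Proof.
rewrite (@m4_emb2l_sum _ _ par W N (fun c a b => (-1) ^+ c * Y c a b)); apply: eq_bigr => c _.
rewrite !m4_emb2l big_distrr; apply: eq_bigr => q _ /=.
by rewrite !mulrA signC.
Qed.

Lemma m4_scal_r (W : T) (phi : A) i j k l :
  m4 W (emb2 (fun a b : I => (a == b)%:R * phi)) i j k l = W i j k l * phi.
Proof.
rewrite m4_emb2r.
transitivity (\sum_(q < kappa) (q == l)%:R * (W i j k l * phi)); last by rewrite sum_delta.
apply: eq_bigr => q _; case: (q =P l) => [->|_]; rewrite ?mul0r ?mulr0 //.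
by rewrite ?eqxx !mul1r addbb andbF /sgn expr0 mul1r.
Qed.

Lemma m4_scal_l (W : T) (phi : A) i j k l :
  m4 (emb2 (fun a b : I => (a == b)%:R * phi)) W i j k l = phi * W i j k l.
Proof.
rewrite m4_emb2l.
transitivity (\sum_(q < kappa) (q == k)%:R * (phi * W i j k l)); last by rewrite sum_delta.
apply: eq_bigr => q _; rewrite eq_sym; case: (q =P k) => [->|_]; rewrite ?mul0r ?mulr0 ?mul0r //.
by rewrite ?eqxx !mul1r addbb /= /sgn expr0 mul1r.
Qed.

End Part2a.

Section Part2.
Variables (A : nzRingType) (kappa : nat) (par : 'I_kappa -> bool).
Variables (eps : 'I_kappa -> int) (b : 'I_kappa -> 'I_kappa -> nat -> A).
Hypothesis H : reflection_eq par eps b.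
Variable f : nat -> A.
Hypothesis Hf : forall N a c, BBneg_coef par eps b N a c = (a == c)%:R * f N.
Local Notation I := 'I_kappa.
Local Notation T := (I -> I -> I -> I -> A).
Local Notation sg := (sgn A).
Local Notation m4 := (mul4 par).
Local Notation m2 := (mul2 par).
Local Notation P := (Pmat A par).
Local Notation Bsh := (Bsh par eps b).
Local Notation Bc := (Bcoef par eps b).

Definition Xm d m : T := emb1 (Bsh d m).
Definition Yn d n : T := emb2 (Bsh d n).
Definition V2 m := m4 (m4 P (Xm 2 m)) P.
Definition V1 m := add4 (m4 (Xm 1 m) P) (m4 P (Xm 1 m)).
Definition V3 m := sub4 (m4 (Xm 2 m) P) (m4 P (Xm 2 m)).

Lemma LexpR m n (Z : T) i j k l : m4 (refl_lhs par eps b m n) Z i j k l =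
  m4 (m4 (Xm 0 m) (Yn 2 n)) Z i j k l + m4 (m4 (V2 m) (Yn 2 n)) Z i j k l
  - m4 (m4 (Xm 2 m) (Yn 0 n)) Z i j k l - m4 (m4 (V1 m) (Yn 2 n)) Z i j k l
  + m4 (m4 (V3 m) (Yn 1 n)) Z i j k l.
Proof. by rewrite /refl_lhs; cbv zeta; rewrite !(m4_subl, m4_addl). Qed.

Lemma LexpL m n (Z : T) i j k l : m4 Z (refl_lhs par eps b m n) i j k l =
  m4 Z (m4 (Xm 0 m) (Yn 2 n)) i j k l + m4 Z (m4 (V2 m) (Yn 2 n)) i j k l
  - m4 Z (m4 (Xm 2 m) (Yn 0 n)) i j k l - m4 Z (m4 (V1 m) (Yn 2 n)) i j k l
  + m4 Z (m4 (V3 m) (Yn 1 n)) i j k l.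
Proof. by rewrite /refl_lhs; cbv zeta; rewrite !(m4_subr, m4_addr). Qed.

Lemma RexpR m n (Z : T) i j k l : m4 (refl_rhs par eps b m n) Z i j k l =
  m4 (m4 (Yn 2 n) (Xm 0 m)) Z i j k l + m4 (m4 (Yn 2 n) (V2 m)) Z i j k l
  - m4 (m4 (Yn 0 n) (Xm 2 m)) Z i j k l - m4 (m4 (Yn 2 n) (V1 m)) Z i j k l
  - m4 (m4 (Yn 1 n) (V3 m)) Z i j k l.
Proof.
rewrite /refl_rhs; cbv zeta; rewrite assocV2 m4_subr_fun.
rewrite !(m4_subl, m4_addl) ?m4_oppl //.
Qed.

Lemma RexpL m n (Z : T) i j k l : m4 Z (refl_rhs par eps b m n) i j k l =
  m4 Z (m4 (Yn 2 n) (Xm 0 m)) i j k l + m4 Z (m4 (Yn 2 n) (V2 m)) i j k l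
  - m4 Z (m4 (Yn 0 n) (Xm 2 m)) i j k l - m4 Z (m4 (Yn 2 n) (V1 m)) i j k l
  - m4 Z (m4 (Yn 1 n) (V3 m)) i j k l.
Proof.
rewrite /refl_rhs; cbv zeta; rewrite assocV2 m4_subr_fun.
rewrite !(m4_subr, m4_addr) ?m4_oppr //.
Qed.

Definition FL (W : T) (i j k l : I) (x y : I -> I -> A) := m4 (m4 W (emb2 x)) (emb2 y) i j k l.
Definition FR (W : T) (i j k l : I) (x y : I -> I -> A) := m4 (m4 (emb2 x) W) (emb2 y) i j k l.
Definition FRr (W : T) (i j k l : I) (x y : I -> I -> A) := m4 (emb2 x) (m4 W (emb2 y)) i j k l.
Definition FT (W : T) (i j k l : I) (x y : I -> I -> A) := m4 (emb2 x) (m4 (emb2 y) W) i j k l.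

Definition Cc (F : (I -> I -> A) -> (I -> I -> A) -> A) M :=
  \sum_(c < M.+1) (-1) ^+ c * F (Bc (M - c)) (Bc c).

Definition SS (F : (I -> I -> A) -> (I -> I -> A) -> A) d1 d2 s :=
  \sum_(n < s.+3) (-1) ^+ n * F (Bsh d1 (s.+2 - n)) (Bsh d2 n).

Lemma SS_re F d1 d2 s :
  (forall y, F (fun _ _ => 0) y = 0) -> (forall x, F x (fun _ _ => 0) = 0) ->
  (d1 + d2 <= s.+2)%N -> SS F d1 d2 s = (-1) ^+ d2 * Cc F (s.+2 - d1 - d2).
Proof.
move=> h1 h2 hd; rewrite /SS (@reindex_sh _ _ par eps b F h1 h2 s.+2 d1 d2).
by rewrite hd /Cc.
Qed.

Lemma FL0 W i j k l : (forall y, FL W i j k l (fun _ _ => 0) y = 0) /\ (forall x, FL W i j k l x (fun _ _ => 0) = 0).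
Proof. by split=> ?; rewrite /FL emb2_0 !(m4_0l, m4_0r). Qed.
Lemma FR0 W i j k l : (forall y, FR W i j k l (fun _ _ => 0) y = 0) /\ (forall x, FR W i j k l x (fun _ _ => 0) = 0).
Proof. by split=> ?; rewrite /FR emb2_0 !(m4_0l, m4_0r). Qed.
Lemma FRr0 W i j k l : (forall y, FRr W i j k l (fun _ _ => 0) y = 0) /\ (forall x, FRr W i j k l x (fun _ _ => 0) = 0).
Proof. by split=> ?; rewrite /FRr emb2_0 !(m4_0l, m4_0r). Qed.
Lemma FT0 W i j k l : (forall y, FT W i j k l (fun _ _ => 0) y = 0) /\ (forall x, FT W i j k l x (fun _ _ => 0) = 0).
Proof. by split=> ?; rewrite /FT emb2_0 !(m4_0l, m4_0r). Qed.

Lemma Cfun M : (fun a c : I => \sum_(t < M.+1) (-1) ^+ t * m2 (Bc (M - t)) (Bc t) a c)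
  = (fun a c => (a == c)%:R * f M).
Proof. do 2!(apply: functional_extensionality => ?); exact: Hf. Qed.

Lemma CcFL W i j k l M : Cc (FL W i j k l) M = W i j k l * f M.
Proof.
rewrite /Cc /FL.
under eq_bigr => c _ do rewrite m4A' m4_emb22.
by rewrite (@m4_emb2r_lin _ _ par W M.+1 (fun c => m2 (Bc (M - c)) (Bc c))) Cfun m4_scal_r.
Qed.

Lemma CcFT W i j k l M : Cc (FT W i j k l) M = f M * W i j k l.
Proof.
rewrite /Cc /FT.
under eq_bigr => c _ do rewrite -m4A' m4_emb22.
by rewrite (@m4_emb2l_lin _ _ par W M.+1 (fun c => m2 (Bc (M - c)) (Bc c))) Cfun m4_scal_l.
Qed.

Lemma CcFR W i j k l M : Cc (FR W i j k l) M = Cc (FRr W i j k l) M.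
Proof. by apply: eq_bigr => c _; rewrite /FR /FRr m4A. Qed.

Lemma keyA m s i j k l :
  SS (FL (Xm 0 m) i j k l) 2 0 s + SS (FL (V2 m) i j k l) 2 0 s - SS (FL (Xm 2 m) i j k l) 0 0 s
  - SS (FL (V1 m) i j k l) 2 0 s + SS (FL (V3 m) i j k l) 1 0 s =
  SS (FR (Xm 0 m) i j k l) 2 0 s + SS (FR (V2 m) i j k l) 2 0 s - SS (FR (Xm 2 m) i j k l) 0 0 s
  - SS (FR (V1 m) i j k l) 2 0 s - SS (FR (V3 m) i j k l) 1 0 s.
Proof.
have : \sum_(n < s.+3) (-1) ^+ n * m4 (refl_lhs par eps b m (s.+2 - n)) (emb2 (Bsh 0 n)) i j k l =
       \sum_(n < s.+3) (-1) ^+ n * m4 (refl_rhs par eps b m (s.+2 - n)) (emb2 (Bsh 0 n)) i j k l.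
  apply: eq_bigr => n _; congr (_ * _).
  have -> // : refl_lhs par eps b m (s.+2 - n) = refl_rhs par eps b m (s.+2 - n).
  by apply: funext4 => *; apply: H.
under eq_bigr => n _ do rewrite LexpR !(mulrDr, mulrN).
under [X in _ = X -> _]eq_bigr => n _ do rewrite RexpR !(mulrDr, mulrN).
by rewrite !(big_split, sumrN) /=.
Qed.

Lemma keyB m s i j k l :
  SS (FRr (Xm 0 m) i j k l) 0 2 s + SS (FRr (V2 m) i j k l) 0 2 s - SS (FRr (Xm 2 m) i j k l) 0 0 s
  - SS (FRr (V1 m) i j k l) 0 2 s + SS (FRr (V3 m) i j k l) 0 1 s =
  SS (FT (Xm 0 m) i j k l) 0 2 s + SS (FT (V2 m) i j k l) 0 2 s - SS (FT (Xm 2 m) i j k l) 0 0 s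
  - SS (FT (V1 m) i j k l) 0 2 s - SS (FT (V3 m) i j k l) 0 1 s.
Proof.
have : \sum_(n < s.+3) (-1) ^+ n * m4 (emb2 (Bsh 0 (s.+2 - n))) (refl_lhs par eps b m n) i j k l =
       \sum_(n < s.+3) (-1) ^+ n * m4 (emb2 (Bsh 0 (s.+2 - n))) (refl_rhs par eps b m n) i j k l.
  apply: eq_bigr => n _; congr (_ * _).
  have -> // : refl_lhs par eps b m n = refl_rhs par eps b m n.
  by apply: funext4 => *; apply: H.
under eq_bigr => n _ do rewrite LexpL !(mulrDr, mulrN).
under [X in _ = X -> _]eq_bigr => n _ do rewrite RexpL !(mulrDr, mulrN).
by rewrite !(big_split, sumrN) /=.
Qed.

Lemma SS_FL W i j k l d1 d2 s : (d1 + d2 <= s.+2)%N ->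
  SS (FL W i j k l) d1 d2 s = (-1) ^+ d2 * Cc (FL W i j k l) (s.+2 - d1 - d2).
Proof. by apply: SS_re; case: (FL0 W i j k l). Qed.
Lemma SS_FR W i j k l d1 d2 s : (d1 + d2 <= s.+2)%N ->
  SS (FR W i j k l) d1 d2 s = (-1) ^+ d2 * Cc (FR W i j k l) (s.+2 - d1 - d2).
Proof. by apply: SS_re; case: (FR0 W i j k l). Qed.
Lemma SS_FRr W i j k l d1 d2 s : (d1 + d2 <= s.+2)%N ->
  SS (FRr W i j k l) d1 d2 s = (-1) ^+ d2 * Cc (FRr W i j k l) (s.+2 - d1 - d2).
Proof. by apply: SS_re; case: (FRr0 W i j k l). Qed.
Lemma SS_FT W i j k l d1 d2 s : (d1 + d2 <= s.+2)%N ->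
  SS (FT W i j k l) d1 d2 s = (-1) ^+ d2 * Cc (FT W i j k l) (s.+2 - d1 - d2).
Proof. by apply: SS_re; case: (FT0 W i j k l). Qed.

Lemma key m s i j k l :
  Xm 0 m i j k l * f s + V2 m i j k l * f s - Xm 2 m i j k l * f s.+2
  - V1 m i j k l * f s + V3 m i j k l * f s.+1 =
  f s * Xm 0 m i j k l + f s * V2 m i j k l - f s.+2 * Xm 2 m i j k l
  - f s * V1 m i j k l - - (f s.+1 * V3 m i j k l).
Proof.
have hA := keyA m s i j k l; have hB := keyB m s i j k l.
rewrite !SS_FL // !SS_FR // in hA.
rewrite !SS_FRr // !SS_FT // in hB.
have e1 : (s.+2 - 2 - 0 = s)%N by lia.
have e2 : (s.+2 - 0 - 0 = s.+2)%N by lia.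
have e3 : (s.+2 - 1 - 0 = s.+1)%N by lia.
have e4 : (s.+2 - 0 - 2 = s)%N by lia.
have e5 : (s.+2 - 0 - 1 = s.+1)%N by lia.
have e6 : (-1) ^+ 2 = 1 :> A by rewrite expr2 mulrNN mulr1.
rewrite ?e1 ?e2 ?e3 ?e4 ?e5 !expr0 ?e6 ?expr1 !mul1r ?mulN1r in hA hB.
rewrite !CcFL !CcFR in hA.
rewrite !CcFT in hB.
rewrite hA -hB.
done.
Qed.

Definition cm (x : A) := forall s, GRing.comm (f s) x.

Lemma cm_m4 (U W : T) : (forall i j k l, cm (U i j k l)) -> (forall i j k l, cm (W i j k l)) ->
  forall i j k l, cm (m4 U W i j k l).
Proof.
move=> hU hW i j k l s; rewrite /mul4.
apply: commr_sum => p _; apply: commr_sum => q _.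
apply: commrM; last exact: hW.
apply: commrM; last exact: hU.
by rewrite /GRing.comm sgnC.
Qed.

Lemma cm_P i j k l : cm (P i j k l).
Proof.
move=> s; rewrite /Pmat; apply: commrM; first exact: commr_nat.
by rewrite /GRing.comm sgnC.
Qed.

Lemma cm_emb1 (x : I -> I -> A) : (forall a c, cm (x a c)) -> forall i j k l, cm (emb1 x i j k l).
Proof. move=> hx i j k l s; rewrite /emb1; apply: commrM; [exact: commr_nat | exact: hx]. Qed.

Lemma cm_add4 (U W : T) : (forall i j k l, cm (U i j k l)) -> (forall i j k l, cm (W i j k l)) ->
  forall i j k l, cm (add4 U W i j k l).
Proof. move=> hU hW i j k l s; apply: commrD; [exact: hU | exact: hW]. Qed.

Lemma cm_sub4 (U W : T) : (forall i j k l, cm (U i j k l)) -> (forall i j k l, cm (W i j k l)) ->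
  forall i j k l, cm (sub4 U W i j k l).
Proof. move=> hU hW i j k l s; apply: commrB; [exact: hU | exact: hW]. Qed.

Theorem central m : forall a c, cm (Bc m a c).
Proof.
elim/ltn_ind: m => m IH a c s.
have hB d : (0 < d)%N -> forall a' c', cm (Bsh d m a' c').
  move=> d0 a' c' s'; rewrite /Defs.Bsh; case: ifP => h; last exact: commr0.
  apply: IH; lia.
have hX d : (0 < d)%N -> forall i j k l, cm (Xm d m i j k l).
  by move=> d0; apply: cm_emb1; apply: hB.
have cV2 : forall i j k l, cm (V2 m i j k l).
  by apply: cm_m4; [apply: cm_m4; [exact: cm_P | exact: hX] | exact: cm_P].
have cV1 : forall i j k l, cm (V1 m i j k l).
  apply: cm_add4; apply: cm_m4; try exact: cm_P; exact: hX.
have cV3 : forall i j k l, cm (V3 m i j k l).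
  apply: cm_sub4; apply: cm_m4; try exact: cm_P; exact: hX.
have := key m s a c a a.
rewrite -(cV2 a c a a s) -(hX 2 isT a c a a s.+2) -(cV1 a c a a s) -(cV3 a c a a s.+1) opprK.
move=> /addIr /addIr /addIr /addIr.
rewrite /Xm /emb1 eqxx mul1r Bsh0 => E.
exact: esym E.
Qed.

End Part2.

Unset Implicit Arguments.

Theorem proposition3p2 (m n : nat) (par : 'I_(m + n) -> bool)
  (Hpar : #|[set i | ~~ par i]| = m)
  (eps : 'I_(m + n) -> int) (Heps : forall i, eps i = 1 \/ eps i = -1)
  (A : algType CC) (b : 'I_(m + n) -> 'I_(m + n) -> nat -> A)
  (Hrefl : reflection_eq par eps b) :
  exists f : nat -> A,
    (forall r : nat, odd r -> f r = 0) /\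
    (forall (r : nat) (i j : 'I_(m + n)) (t : nat), (0 < t)%N ->
        f r * b i j t = b i j t * f r) /\
    (forall (N : nat) (i j : 'I_(m + n)),
        BBneg_coef par eps b N i j = (i == j)%:R * f N).
Proof.
have H2 : forall x : A, x *+ 2 = 0 -> x = 0.
  move=> x hx.
  have h2 : (2%:R : CC) != 0 by rewrite Num.Theory.pnatr_eq0.
  by rewrite -[x]scale1r -(mulVf h2) -scalerA scaler_nat hx scaler0.
case: (pickP (fun _ : 'I_(m + n) => true)) => [i0 _|none]; last first.
  exists (fun _ => 0); split=> // ; split=> [r i|N i]; by have := none i.
pose f N := BBneg_coef par eps b N i0 i0.
have fodd : forall r, odd r -> f r = 0.
  by move=> r hr; rewrite /f (oddC Hrefl H2 i0 hr).
have Hf : forall N a c, BBneg_coef par eps b N a c = (a == c)%:R * f N.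
  move=> N a c; case: (a =P c) => [<-|ac]; last first.
    by rewrite (offdiag Hrefl H2) ?mul0r //; apply/eqP.
  rewrite mul1r /f; case: (a =P i0) => [->//|ai].
  rewrite (diag Hrefl H2 N (i := a) (j := i0)); last by apply/eqP.
  case hN : (odd N).
    by rewrite (oddC Hrefl H2 i0 hN) mulr0.
  by rewrite -signr_odd hN expr0 mul1r.
exists f; split=> //; split=> // r i j t t0.
have := central Hrefl Hf t i j r.
rewrite /GRing.comm /Bcoef /bser.
case: t t0 => // t _.
rewrite mulrA -(sgnC _ (f r)) -!mulrA => E.
by have := congr1 (fun z => sgn A ((par i && par j) (+) par j) * z) E; rewrite !mulrA sgnK !mul1r.
Qed.
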